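(* Let $n\ge 2$, $P_{\max}>0$, $g_{i,i}>0$ and $g_{i,j}\ge 0$ for all $i,j\in\{1,\dots,n\}$. For $\mathbf P\in[0,P_{\max}]^n$ let $\mathbf R(\mathbf P)=(R_1(\mathbf P),\dots,R_n(\mathbf P))$. Define the power-control rate region $$\mathcal A=\{\mathbf r\in\mathbb R_{\ge0}^n:\ \exists\,\mathbf P\in[0,P_{\max}]^n \text{ with } \mathbf r\le \mathbf R(\mathbf P)\text{ componentwise}\}.$$ For each $i$ define the hyper-surface $\Phi_i=\{\mathbf R(\mathbf P):\mathbf P\in[0,P_{\max}]^n,\ P_i=P_{\max}\}$ and the region $$\mathcal R_i=\{\mathbf r\in\mathbb R^n_{\ge 0}: \exists\,\mathbf x\in\Phi_i,\ \mathbf r\le\mathbf x \text{ componentwise}\}.$$ Then $\mathcal A=\bigcup_{i=1}^n\mathcal R_i$. Consequently, the achievable rate region $\mathcal R=\mathrm{Conv}(\mathcal A)$ satisfies $$\mathcal R=\mathrm{Conv}\Big(\bigcup_{i=1}^n\mathcal R_i\Big).$$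
   Context: This is the $n$-user interference channel with interference treated as noise. Transmitter $i$ uses power $P_i\in[0,P_{\max}]$. The quantity $g_{i,j}$ is the channel power gain from transmitter $j$ to receiver $i$, normalized by the (unit) noise variance. The rate of pair $i$ is $$R_i(\mathbf P)=\log_2\!\left(1+\frac{g_{i,i}P_i}{1+\sum_{j\ne i}g_{i,j}P_j}\right).$$ $\mathrm{Conv}$ denotes the convex hull; taking it corresponds to time-sharing between operating points. *)

(* Defs.v *)
From Stdlib Require Import Reals Lra Lia.
Open Scope R_scope.

(* Indices are 0..n-1 (paper: 1..n).  Vectors in R^n are functions nat -> R,
   only the components with index < n matter. *)

Fixpoint sum_upto (n : nat) (f : nat -> R) : R :=
  match n with
  | O => 0
  | S m => sum_upto m f + f m
  end.

Definition log2 (x : R) : R := ln x / ln 2.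

Definition interf (n : nat) (g : nat -> nat -> R) (P : nat -> R) (i : nat) : R :=
  sum_upto n (fun j => if Nat.eqb j i then 0 else g i j * P j).

Definition rate (n : nat) (g : nat -> nat -> R) (P : nat -> R) (i : nat) : R :=
  log2 (1 + g i i * P i / (1 + interf n g P i)).

Definition power_ok (n : nat) (Pmax : R) (P : nat -> R) : Prop :=
  forall i, (i < n)%nat -> 0 <= P i <= Pmax.

Definition nonneg_vec (n : nat) (r : nat -> R) : Prop :=
  forall i, (i < n)%nat -> 0 <= r i.

Definition vle (n : nat) (r x : nat -> R) : Prop :=
  forall i, (i < n)%nat -> r i <= x i.

Definition regionA (n : nat) (Pmax : R) (g : nat -> nat -> R) (r : nat -> R) : Prop :=
  nonneg_vec n r /\
  exists P, power_ok n Pmax P /\ vle n r (rate n g P).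

Definition Phi (n : nat) (Pmax : R) (g : nat -> nat -> R) (i : nat) (x : nat -> R) : Prop :=
  exists P, power_ok n Pmax P /\ P i = Pmax /\
    forall k, (k < n)%nat -> x k = rate n g P k.

Definition regionRi (n : nat) (Pmax : R) (g : nat -> nat -> R) (i : nat) (r : nat -> R) : Prop :=
  nonneg_vec n r /\ exists x, Phi n Pmax g i x /\ vle n r x.

Definition unionRi (n : nat) (Pmax : R) (g : nat -> nat -> R) (r : nat -> R) : Prop :=
  exists i, (i < n)%nat /\ regionRi n Pmax g i r.

Definition conv (S : (nat -> R) -> Prop) (r : nat -> R) : Prop :=
  exists (m : nat) (lam : nat -> R) (pts : nat -> nat -> R),
    (forall k, (k < m)%nat -> 0 <= lam k /\ S (pts k)) /\
    sum_upto m lam = 1 /\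
    forall i, r i = sum_upto m (fun k => lam k * pts k i).

(* Main.v *)
Require Import Defs.
From Stdlib Require Import Reals Lra Lia FunctionalExtensionality.
Open Scope R_scope.

Lemma sum_nonneg m f : (forall j, (j < m)%nat -> 0 <= f j) -> 0 <= sum_upto m f.
Proof.
  induction m; simpl; intros H; [lra|].
  assert (0 <= f m) by (apply H; lia).
  assert (0 <= sum_upto m f) by (apply IHm; intros; apply H; lia). lra.
Qed.

Lemma sum_scale m c f : sum_upto m (fun j => c * f j) = c * sum_upto m f.
Proof. induction m; simpl; [ring|rewrite IHm; ring]. Qed.

Lemma log2_le x y : 0 < x -> x <= y -> log2 x <= log2 y.
Proof.
  intros Hx Hy. unfold log2. assert (0 < ln 2) by (pose proof ln_lt_2; lra).
  destruct Hy as [Hy|Hy].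
  - apply Rmult_le_compat_r. left; apply Rinv_0_lt_compat; lra.
    left; apply ln_increasing; lra.
  - subst; lra.
Qed.

Lemma interf_nonneg n g P i : (i < n)%nat ->
  (forall i j, (i < n)%nat -> (j < n)%nat -> 0 <= g i j) ->
  (forall j, (j < n)%nat -> 0 <= P j) -> 0 <= interf n g P i.
Proof.
  intros Hi Hg HP. unfold interf. apply sum_nonneg. intros j Hj.
  destruct (Nat.eqb j i); [lra|]. apply Rmult_le_pos; auto.
Qed.

Lemma rate_ge0 n g P k : (k < n)%nat -> 0 < g k k ->
  (forall i j, (i < n)%nat -> (j < n)%nat -> 0 <= g i j) ->
  (forall j, (j < n)%nat -> 0 <= P j) -> 0 <= rate n g P k.
Proof.
  intros Hk Hgk Hg HP. unfold rate.
  assert (log2 1 = 0) by (unfold log2; rewrite ln_1; lra).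
  rewrite <- H. apply log2_le; [lra|].
  pose proof (interf_nonneg n g P k Hk Hg HP).
  assert (0 <= g k k * P k / (1 + interf n g P k)).
  { unfold Rdiv. apply Rmult_le_pos. apply Rmult_le_pos; [lra| apply HP; auto].
    left; apply Rinv_0_lt_compat; lra. }
  lra.
Qed.

Lemma rate_scale n g P k c : (k < n)%nat -> 0 < g k k -> 1 <= c ->
  (forall i j, (i < n)%nat -> (j < n)%nat -> 0 <= g i j) ->
  (forall j, (j < n)%nat -> 0 <= P j) ->
  rate n g P k <= rate n g (fun j => c * P j) k.
Proof.
  intros Hk Hgk Hc Hg HP. unfold rate.
  assert (E : interf n g (fun j => c * P j) k = c * interf n g P k).
  { unfold interf. rewrite <- sum_scale. f_equal. apply functional_extensionality.
    intros j. destruct (Nat.eqb j k); ring. }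
  rewrite E.
  pose proof (interf_nonneg n g P k Hk Hg HP) as HI.
  set (I := interf n g P k) in *.
  assert (Ha : 0 <= g k k * P k) by (apply Rmult_le_pos; [lra|apply HP; auto]).
  set (a := g k k * P k) in *.
  assert (Hle : a / (1 + I) <= g k k * (c * P k) / (1 + c * I)).
  { replace (g k k * (c * P k)) with (c * a) by (unfold a; ring).
    assert (0 < 1 + I) by lra. assert (0 < 1 + c * I) by nra.
    unfold Rdiv. apply Rmult_le_reg_r with ((1+I)*(1+c*I)). nra.
    replace (a * / (1 + I) * ((1 + I) * (1 + c * I))) with (a * (1 + c*I)) by (field; lra).
    replace (c * a * / (1 + c * I) * ((1 + I) * (1 + c * I))) with (c * a * (1 + I)) by (field; lra).
    nra. }
  apply log2_le; [|lra].
  assert (0 <= a / (1+I)) by (unfold Rdiv; apply Rmult_le_pos; [lra|left; apply Rinv_0_lt_compat; lra]).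
  lra.
Qed.

Lemma argmax n (P : nat -> R) : (1 <= n)%nat ->
  exists i, (i < n)%nat /\ forall j, (j < n)%nat -> P j <= P i.
Proof.
  induction n; intros H; [lia|].
  destruct n. { exists 0%nat. split; [lia|]. intros j Hj. assert (j = 0%nat) by lia. subst; lra. }
  destruct IHn as [i [Hi Hm]]; [lia|].
  destruct (Rle_dec (P i) (P (S n))).
  - exists (S n). split; [lia|]. intros j Hj. destruct (Nat.eq_dec j (S n)); [subst; lra|].
    assert (P j <= P i) by (apply Hm; lia). lra.
  - exists i. split; [lia|]. intros j Hj. destruct (Nat.eq_dec j (S n)); [subst; lra|].
    apply Hm; lia.
Qed.

Theorem theorem1 (n : nat) (Pmax : R) (g : nat -> nat -> R)
  (hn : (2 <= n)%nat) (hP : 0 < Pmax)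
  (hgii : forall i, (i < n)%nat -> 0 < g i i)
  (hgij : forall i j, (i < n)%nat -> (j < n)%nat -> 0 <= g i j) :
  (forall r, regionA n Pmax g r <-> unionRi n Pmax g r) /\
  (forall r, conv (regionA n Pmax g) r <-> conv (unionRi n Pmax g) r).
Proof.
  assert (A : forall r, regionA n Pmax g r <-> unionRi n Pmax g r).
  { intros r; split.
    - intros [Hr [P [HP Hle]]].
      destruct (argmax n P) as [i0 [Hi0 Hm]]; [lia|].
      exists i0. split; auto. split; auto.
      assert (HP0 : forall j, (j < n)%nat -> 0 <= P j) by (intros j Hj; apply HP; auto).
      destruct (Req_dec (P i0) 0) as [Z|NZ].
      + exists (rate n g (fun _ => Pmax)). split.
        * exists (fun _ => Pmax). split; [intros ii Hii; split; lra|]. split; auto.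
        * intros k Hk. apply Rle_trans with (rate n g P k); [apply Hle; auto|].
          assert (Pk : P k = 0) by (pose proof (Hm k Hk); pose proof (HP0 k Hk); lra).
          assert (rate n g P k = 0).
          { unfold rate. rewrite Pk. replace (1 + g k k * 0 / (1 + interf n g P k)) with 1.
            unfold log2; rewrite ln_1; lra. unfold Rdiv; ring. }
          rewrite H. apply rate_ge0; auto. intros; lra.
      + assert (Hpos : 0 < P i0) by (pose proof (HP0 i0 Hi0); lra).
        set (c := Pmax / P i0).
        assert (Hc : 1 <= c).
        { unfold c. destruct (HP i0 Hi0). apply Rmult_le_reg_r with (P i0); auto.
          unfold Rdiv. rewrite Rmult_assoc, Rinv_l; lra. }
        exists (rate n g (fun j => c * P j)). split.
        * exists (fun j => c * P j). split; [|split; auto].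
          -- intros j Hj. split. apply Rmult_le_pos; [lra|auto].
             apply Rle_trans with (c * P i0). apply Rmult_le_compat_l; [lra|auto].
             unfold c. right. field. lra.
          -- unfold c. field. lra.
        * intros k Hk. apply Rle_trans with (rate n g P k); [apply Hle; auto|].
          apply rate_scale; auto.
    - intros [i [Hi [Hr [x [[P [HP [HPi Hx]]] Hle]]]]].
      split; auto. exists P. split; auto. intros k Hk. rewrite <- Hx; auto. }
  split; auto.
  intros r. unfold conv. split; intros [m [lam [pts [H1 H2]]]]; exists m, lam, pts;
    split; auto; intros k Hk; destruct (H1 k Hk); split; auto; apply A; auto.
Qed.
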